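(* Let $G\subseteq W(\mathsf D_n)$ satisfy the (H1), relative minimality and minimality conditions, let $O=\{1,\dots,n'\}$ (after relabelling) be an orbit of $pr(G)$ on $\{1,\dots,n\}$, and let $\overline G_O=P_O(G)$, regarded as a subgroup of $W(\mathsf D_{n'})$ if $\sigma(g_O)=1$ for all $g\in G$ and as a subgroup of $W(\mathsf D_{n'+1})$ otherwise, acting on the corresponding lattice $\mathbb Z^{N+2}=\bigoplus_{i=-1}^{N}\mathbb Z\bar l_i$ ($N=n'$ resp. $N=n'+1$) via $\Phi$. Then $\overline G_O$ satisfies both the relative minimality condition and the (H1) condition.
   Context: For $m\ge1$, $W(\mathsf B_m)$ is the group of signed permutations of symbols $j^\pm$ ($1\le j\le m$), generated by $\mathfrak S_m$ and involutions $c_j$; elements are $c_{j_1}\cdots c_{j_t}\tau$; $pr(\cdot)=\tau$; $\sigma(\cdot)=(-1)^t$; $W(\mathsf D_m)=\ker\sigma$. Signed permutation cycles of $g$: $\beta_\gamma=(\prod_{j_i\in\mathrm{supp}\,\gamma}c_{j_i})\gamma$ for each cycle $\gamma$ of $\tau$ (fixed points included). $W(\mathsf D_m)$ acts on $\bigoplus_{i=-1}^m\mathbb Zl_i$ via $\Phi$: for $g=c_{j_1}\cdots c_{j_t}\tau$ with $s(i)=-1$ iff $i\in\{j_1,\dots,j_t\}$, $\Phi(g)l_0=l_0$, $\Phi(g)l_{-1}=l_{-1}+\frac t2l_0-\sum_{s(i)=-1}l_i$, and $\Phi(g)l_v=l_u$ or $l_0-l_u$ ($u=\tau^{-1}(v)$)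 according as $s(u)=1$ or $-1$; for $m=n$ this lattice is $\mathrm{Pic}(\bar X)$ of a standard conic bundle with $n$ degenerate fibers. A subgroup $H\subseteq W(\mathsf D_m)$ satisfies (H1) if $\mathrm H^1(H',\mathbb Z^{m+2})=0$ for all subgroups $H'\subseteq H$, and relative minimality if its invariants are $\mathbb Zl_0\oplus\mathbb ZK$, $K=-2(l_{-1}+l_0)+\sum_{i=1}^ml_i$. Minimality of $G$: $G$ corresponds to a $k$-minimal conic bundle; in particular for each $j$, $j^+$ and $j^-$ lie in one $G$-orbit. For $g\in G$, $g_O$ is the product of the signed permutation cycles of $g$ with underlying cycle in $O$, and $P_O(g)=g_Oc_{n'+1}$ if $\sigma(g_O)=-1$, $P_O(g)=g_O$ otherwise. *)

(* Defs.v *)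
From HB Require Import structures.
From mathcomp Require Import all_boot all_order all_algebra all_fingroup.
Set Implicit Arguments. Unset Strict Implicit. Unset Printing Implicit Defensive.
Import GRing.Theory.
Local Open Scope ring_scope.

(* The symbol j^+ is (j, true), the symbol j^- is (j, false).
   Group law: MathComp's  (g * h) x = h (g x)  (left-to-right composition);
   with this convention the map Phi below is a group homomorphism. *)

Definition sym (I : finType) := (I * bool)%type.
Definition sflip (I : finType) (x : sym I) : sym I := (x.1, ~~ x.2).

Definition WB (I : finType) : {set {perm sym I}} :=
  [set g : {perm sym I} | [forall x, g (sflip x) == sflip (g x)]].

Definition prf (I : finType) (g : {perm sym I}) (i : I) : I := (g (i, true)).1.
Definition flipped (I : finType) (g : {perm sym I}) : {set I} :=
  [set i : I | ~~ (g (i, true)).2].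
Definition tcount (I : finType) (g : {perm sym I}) : nat := #|flipped g|.
(* sigma(g) = -1  iff  sigma_odd g *)
Definition sigma_odd (I : finType) (g : {perm sym I}) : bool := odd (tcount g).

Definition WD (I : finType) : {set {perm sym I}} :=
  [set g in WB I | ~~ sigma_odd g].

(* The lattice  (+)_{i=-1}^{m} Z l_i :  None = l_{-1}, Some None = l_0,
   Some (Some i) = l_i  for i in I. *)
Definition lidx (I : finType) := option (option I).
Definition lat (I : finType) := {ffun lidx I -> int}.
Definition lscale (I : finType) (c : int) (x : {ffun lidx I -> int}) :
  {ffun lidx I -> int} := [ffun b => c * x b].
Definition lb (I : finType) (a : lidx I) : lat I := [ffun b => (a == b)%:Z].
Definition lm1 (I : finType) : lat I := lb (None : lidx I).
Definition l0 (I : finType) : lat I := lb (Some None : lidx I).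
Definition li (I : finType) (i : I) : lat I := lb (Some (Some i)).

Definition PhiImg (I : finType) (g : {perm sym I}) (a : lidx I) : lat I :=
  match a with
  | None => lm1 I + lscale ((tcount g %/ 2)%N%:Z) (l0 I)
              - \sum_(i in flipped g) li i
  | Some None => l0 I
  | Some (Some v) =>
      let p := (g^-1)%g (v, true) in   (* p.1 = u = tau^{-1}(v), p.2 <-> s(u) = 1 *)
      if p.2 then li p.1 else l0 I - li p.1
  end.

Definition Phi (I : finType) (g : {perm sym I}) (x : lat I) : lat I :=
  \sum_(a : lidx I) lscale (x a) (PhiImg g a).

Definition H1_zero (I : finType) (H : {set {perm sym I}}) : Prop :=
  forall f : {perm sym I} -> lat I,
    (forall g h, g \in H -> h \in H -> f (g * h)%g = f g + Phi g (f h)) ->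
    exists x : lat I, forall g, g \in H -> f g = Phi g x - x.

Definition condH1 (I : finType) (H : {set {perm sym I}}) : Prop :=
  forall H' : {group {perm sym I}}, H' \subset H -> H1_zero H'.

Definition Kcan (I : finType) : lat I :=
  lscale (-2) (lm1 I + l0 I) + \sum_(i : I) li i.

Definition relmin (I : finType) (H : {set {perm sym I}}) : Prop :=
  forall x : lat I, (forall g, g \in H -> Phi g x = x) <->
    exists a b : int, x = lscale a (l0 I) + lscale b (Kcan I).

Definition minimal_cond (I : finType) (H : {set {perm sym I}}) : Prop :=
  forall j : I, exists2 g, g \in H & g (j, true) = (j, false).

Definition pr_orbit (I : finType) (G : {set {perm sym I}}) (i0 : I) : {set I} :=
  [set prf g i0 | g in G].

Definition sO (I : finType) (O : {set I}) := {x : I | x \in O}.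

Definition restr (I : finType) (O : {set I}) (g : {perm sym I})
    (x : sym (sO O)) : sym (sO O) :=
  let y := g (val x.1, x.2) in (insubd x.1 y.1, y.2).

(* g_O  (injective as soon as O is stable under pr(g); 1 otherwise) *)
Definition gO (I : finType) (O : {set I}) (g : {perm sym I}) : {perm sym (sO O)} :=
  insubd (1%g : {perm sym (sO O)}) [ffun x => @restr I O g x].

(* P_O(g) = g_O c_{n'+1} if sigma(g_O) = -1, g_O otherwise;
   the extra index n'+1 is None *)
Definition POfun (I : finType) (O : {set I}) (g : {perm sym I})
    (x : sym (option (sO O))) : sym (option (sO O)) :=
  match x.1 with
  | Some k => let y := @gO I O g (k, x.2) in (Some y.1, y.2)
  | None => (None, x.2 (+) sigma_odd (@gO I O g))
  end.

Definition PO (I : finType) (O : {set I}) (g : {perm sym I})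
  : {perm sym (option (sO O))} := insubd (1%g : {perm sym (option (sO O))}) [ffun x => @POfun I O g x].

Definition GbarA (I : finType) (G : {set {perm sym I}}) (O : {set I})
  : {set {perm sym (sO O)}} := [set @gO I O g | g in G].
Definition GbarB (I : finType) (G : {set {perm sym I}}) (O : {set I})
  : {set {perm sym (option (sO O))}} := [set @PO I O g | g in G].

(* Main.v *)
Require Import Defs.
From mathcomp Require Import all_boot all_order all_algebra all_fingroup.
From mathcomp Require Import zify ring.
Set Implicit Arguments. Unset Strict Implicit. Unset Printing Implicit Defensive.
Import GRing.Theory.
Local Open Scope ring_scope.
Lemma big_optionE (R : Type) (idx : R) (op : Monoid.com_law idx) (T : finType)
  (F : option T -> R) :
  \big[op/idx]_(o : option T) F o = op (F None) (\big[op/idx]_(t : T) F (Some t)).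
Proof.
rewrite (bigD1 None) //=; congr (op _ _).
rewrite (reindex_omap (Some : T -> option T) id) /=.
  by apply: eq_bigl => t; rewrite eqxx.
by move=> [t|].
Qed.

Lemma sum_indic (T : finType) (A : {pred T}) (w : T) (c : T -> int) :
  \sum_(i in A) c i * (i == w)%:Z = if w \in A then c w else 0.
Proof.
case: (boolP (w \in A)) => wA.
  rewrite (bigD1 w) //= eqxx mulr1 big1 ?addr0 // => i /andP[_ /negbTE ->].
  by rewrite mulr0.
rewrite big1 // => i iA; case: eqP => [e|]; last by rewrite mulr0.
by subst; rewrite iA in wA.
Qed.

Lemma sum_indicT (T : finType) (w : T) (c : T -> int) :
  \sum_i c i * (i == w)%:Z = c w.
Proof.
rewrite (bigD1 w) //= eqxx mulr1 big1 ?addr0 // => i /negbTE ->.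
by rewrite mulr0.
Qed.

Lemma even_half n : ~~ odd n -> n = (n %/ 2 * 2)%N.
Proof. by move=> e; rewrite divn2 muln2 -{1}(odd_double_half n) (negbTE e). Qed.

Lemma half_aux tgh tg th m : ~~ odd tg -> ~~ odd th -> (tgh + 2 * m = tg + th)%N ->
  Posz (tgh %/ 2)%N = Posz (tg %/ 2)%N + Posz (th %/ 2)%N - Posz m.
Proof.
move=> eg eh e.
have etgh : ~~ odd tgh.
  by move: (congr1 odd e); rewrite mul2n !oddD odd_double (negbTE eg) (negbTE eh) addbF => ->.
move: e; rewrite {1}(even_half etgh) {1}(even_half eg) {1}(even_half eh).
move: (tgh %/ 2)%N (tg %/ 2)%N (th %/ 2)%N => a b c e.
lia.
Qed.

Section WBfacts.
Variable I : finType.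
Implicit Types (g h : {perm sym I}) (x y : lat I).

Lemma WB_sflip g z : g \in WB I -> g (sflip z) = sflip (g z).
Proof. by rewrite inE => /forallP /(_ z) /eqP. Qed.

Lemma WB_gen g u b : g \in WB I -> g (u, b) = (prf g u, b (+) (u \in flipped g)).
Proof.
move=> gW; rewrite /prf inE.
case: b.
  by case: (g (u, true)) => a [].
have -> : (u, false) = sflip (u, true) by [].
by rewrite WB_sflip //; case: (g (u, true)) => a [].
Qed.

Lemma WB_inv g u : g \in WB I -> (g^-1)%g (prf g u, true) = (u, u \notin flipped g).
Proof.
move=> gW; rewrite -[(prf g u, true)](_ : g (u, u \notin flipped g) = _) ?permK //.
by rewrite WB_gen //; case: (u \in flipped g).
Qed.

Lemma WB_true_at g u : g \in WB I -> g (u, u \notin flipped g) = (prf g u, true).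
Proof. by move=> gW; rewrite WB_gen //; case: (u \in flipped g). Qed.

Lemma prf_inj g : g \in WB I -> injective (prf g).
Proof.
move=> gW u v e.
have := WB_true_at u gW; rewrite e -(WB_true_at v gW) => /perm_inj.
by case.
Qed.

Lemma prf_mul g h u : h \in WB I -> prf (g * h)%g u = prf h (prf g u).
Proof.
move=> hW; rewrite {1}/prf permM.
rewrite -[g (u, true)]/(g (u,true)).
have -> : g (u, true) = (prf g u, (g (u,true)).2) by rewrite /prf; case: (g (u,true)).
by rewrite WB_gen.
Qed.

Lemma flipped_mul g h u : h \in WB I ->
  (u \in flipped (g * h)%g) = (u \in flipped g) (+) (prf g u \in flipped h).
Proof.
move=> hW; rewrite {1}/flipped inE permM.
have -> : g (u, true) = (prf g u, (g (u,true)).2) by rewrite /prf; case: (g (u,true)).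
rewrite WB_gen //= /flipped inE.
by rewrite inE; case: (g (u, true)).2; case: (h (prf g u, true)).2.
Qed.

Lemma prf1 u : prf (1%g : {perm sym I}) u = u.
Proof. by rewrite /prf perm1. Qed.

Lemma flipped1 : flipped (1%g : {perm sym I}) = set0.
Proof. by apply/setP => u; rewrite !inE perm1. Qed.

Lemma reindex_prf g (F : I -> int) : g \in WB I ->
  \sum_(v : I) F v = \sum_(u : I) F (prf g u).
Proof. by move=> gW; rewrite (reindex_inj (prf_inj gW)). Qed.

Lemma reindex_prf_nat g (F : I -> nat) : g \in WB I ->
  (\sum_(v : I) F v = \sum_(u : I) F (prf g u))%N.
Proof. by move=> gW; rewrite (reindex_inj (prf_inj gW)). Qed.

Lemma card_sum (A : {set I}) : #|A| = (\sum_(u : I) (u \in A))%N.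
Proof. by rewrite -sum1_card big_mkcond /=; apply: eq_bigr => u _; case: (u \in A). Qed.

Lemma tcount_mul g h : g \in WB I -> h \in WB I ->
  (tcount (g * h)%g + 2 * #|[set u | (u \in flipped g) && (prf g u \in flipped h)]|
   = tcount g + tcount h)%N.
Proof.
move=> gW hW; rewrite /tcount !card_sum.
rewrite (reindex_prf_nat (fun v => nat_of_bool (v \in flipped h)) gW).
rewrite big_distrr /= -!big_split /=; apply: eq_bigr => u _.
rewrite flipped_mul // inE.
by case: (u \in flipped g); case: (prf g u \in flipped h).
Qed.

Lemma lscaleE c x b : lscale c x b = c * x b.
Proof. by rewrite ffunE. Qed.

Lemma lbE (a b : lidx I) : lb a b = (a == b)%:Z.
Proof. by rewrite ffunE. Qed.

Lemma latD x y b : (x + y) b = x b + y b. Proof. by rewrite ffunE. Qed.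
Lemma latN x b : (- x) b = - x b. Proof. by rewrite ffunE. Qed.
Lemma latB x y b : (x - y) b = x b - y b. Proof. by rewrite latD latN. Qed.
Lemma lat0 b : (0 : lat I) b = 0. Proof. by rewrite ffunE. Qed.
Lemma latS (A : {pred I}) (F : I -> lat I) b : (\sum_(i in A) F i) b = \sum_(i in A) F i b.
Proof. by rewrite sum_ffunE. Qed.
Lemma lat_if (c : bool) x y b : (if c then x else y) b = if c then x b else y b.
Proof. by case: c. Qed.
Lemma eqSS (i w : I) : (Some (Some i) == Some (Some w) :> lidx I) = (i == w).
Proof. by apply/eqP/eqP => [[]|->]. Qed.

Lemma PhiE g x : g \in WB I ->
  Phi g x = [ffun b => match b with
   | None => x None
   | Some None => x (Some None) + x None * ((tcount g %/ 2)%N)%:Z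
                  + \sum_(u in flipped g) x (Some (Some (prf g u)))
   | Some (Some w) => if w \in flipped g then - x None - x (Some (Some (prf g w)))
                      else x (Some (Some (prf g w)))
   end].
Proof.
move=> gW; apply/ffunP => b; rewrite /Phi sum_ffunE ffunE.
rewrite big_optionE big_optionE /= !lscaleE.
rewrite [X in _ + (_ + X)](eq_bigr (fun t => x (Some (Some t)) * (if (g^-1%g (t, true)).2 then li (g^-1%g (t, true)).1 else l0 I - li (g^-1%g (t, true)).1) b)); last by move=> t _; rewrite lscaleE.
rewrite [X in _ + (_ + X)](reindex_inj (prf_inj gW)) /=.
rewrite [X in _ + (_ + X)](eq_bigr (fun u => x (Some (Some (prf g u))) * (if u \notin flipped g then li u else l0 I - li u) b)); last by move=> u _; rewrite WB_inv.
case: b => [[w|]|] /=.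
- rewrite /lm1 /l0 /li !latB !latD latS !lscaleE !lbE.
  under eq_bigr => i _ do rewrite lat_if latB !lbE.
  rewrite [X in _ * (_ - X)](eq_bigr (fun i => 1 * (i == w)%:Z)); last by move=> i _ /=; rewrite lbE mul1r.
  rewrite sum_indic /=.
  rewrite [X in _ + (_ + X)](eq_bigr (fun i => (x (Some (Some (prf g i))) * (if i \notin flipped g then 1 else -1)) * (i == w)%:Z)); last first.
    by move=> i _ /=; rewrite eqSS; case: (i \notin flipped g); case: (i == w); rewrite /= ?mulr0 ?mulr1 ?mulrN ?sub0r.
  rewrite sum_indicT /=.
  by case: (w \in flipped g) => /=; ring.
- rewrite /lm1 /l0 /li !latB !latD latS !lscaleE !lbE.
  under eq_bigr => i _ do rewrite lat_if latB !lbE.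
  rewrite [X in _ * (_ - X)]big1; last by move=> i _; rewrite lbE.
  rewrite [X in _ + (_ + X)](eq_bigr (fun i => if i \in flipped g then x (Some (Some (prf g i))) else 0)); last first.
    by move=> i _; case: (i \in flipped g) => /=; rewrite ?eqxx /= ?subr0 ?mulr1 ?mulr0.
  rewrite -big_mkcond /=; ring.
- rewrite /lm1 /l0 /li !latB !latD latS !lscaleE !lbE.
  under eq_bigr => i _ do rewrite lat_if latB !lbE.
  rewrite [X in _ * (_ - X)]big1; last by move=> i _; rewrite lbE.
  rewrite [X in _ + (_ + X)]big1; last first.
    by move=> i _; case: (i \notin flipped g) => /=; rewrite ?subr0 ?mulr0.
  rewrite /=; ring.
Qed.
Lemma Phi_m1 g x : g \in WB I -> Phi g x None = x None.
Proof. by move=> gW; rewrite PhiE // ffunE. Qed.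

Lemma Phi_0 g x : g \in WB I -> Phi g x (Some None) =
  x (Some None) + x None * ((tcount g %/ 2)%N)%:Z
                  + \sum_(u in flipped g) x (Some (Some (prf g u))).
Proof. by move=> gW; rewrite PhiE // ffunE. Qed.

Lemma Phi_i g x w : g \in WB I -> Phi g x (Some (Some w)) =
  if w \in flipped g then - x None - x (Some (Some (prf g w)))
  else x (Some (Some (prf g w))).
Proof. by move=> gW; rewrite PhiE // ffunE. Qed.

Lemma Posz_sum (F : I -> nat) : Posz (\sum_i F i)%N = \sum_i Posz (F i).
Proof. by rewrite (big_morph Posz PoszD (erefl _)). Qed.

Lemma Phi_mul g h x : g \in WB I -> h \in WB I -> ~~ odd (tcount g) -> ~~ odd (tcount h) ->
  Phi (g * h)%g x = Phi g (Phi h x).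
Proof.
move=> gW hW eg eh.
have ghW : (g * h)%g \in WB I.
  rewrite inE; apply/forallP => z; rewrite !permM !WB_sflip //.
apply/ffunP => -[[w|]|].
- rewrite Phi_i // Phi_i // Phi_i // Phi_m1 // flipped_mul // prf_mul //.
  by case: (w \in flipped g); case: (prf g w \in flipped h) => /=; ring.
- rewrite Phi_0 // Phi_0 // Phi_0 // Phi_m1 //.
  under [X in _ = _ + X]eq_bigr => u _ do rewrite Phi_i //.
  have tm := tcount_mul gW hW.
  set m := #|_| in tm.
  rewrite (half_aux eg eh tm).
  have -> : Posz m = \sum_u Posz ((u \in flipped g) && (prf g u \in flipped h)).
    by rewrite /m card_sum Posz_sum; apply: eq_bigr => u _; rewrite inE.
  rewrite !(big_mkcond (fun u => u \in flipped _)) /=.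
rewrite [X in _ = _ + _ + X + _ + _](reindex_inj (prf_inj gW)) /=.
  rewrite mulrBr mulrDr big_distrr /=.
  set SL := \sum_i (if i \in flipped (g * h) then _ else _).
  set R1 := \sum_i (if prf g i \in flipped h then _ else _).
  set R2 := \sum_i (if i \in flipped g then _ else _).
  set R3 := \sum_i (x None * _).
  have -> : SL = R1 + R2 + R3.
    rewrite /SL /R1 /R2 /R3 -!big_split /=; apply: eq_bigr => u _.
    rewrite flipped_mul // prf_mul //.
    by case: (u \in flipped g); case: (prf g u \in flipped h) => /=; ring.
  ring.
- by rewrite !Phi_m1.
Qed.
Lemma PhiD g x y : g \in WB I -> Phi g (x + y) = Phi g x + Phi g y.
Proof.
move=> gW; apply/ffunP => -[[w|]|]; rewrite latD.
- by rewrite !Phi_i // !latD; case: (w \in flipped g); ring.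
- rewrite !Phi_0 // !latD.
  rewrite (eq_bigr (fun u => x (Some (Some (prf g u))) + y (Some (Some (prf g u))))); last by move=> u _; rewrite latD.
  rewrite big_split /=; ring.
- by rewrite !Phi_m1 // latD.
Qed.

Lemma PhiN g x : g \in WB I -> Phi g (- x) = - Phi g x.
Proof.
move=> gW; apply/ffunP => -[[w|]|]; rewrite latN.
- by rewrite !Phi_i // !latN; case: (w \in flipped g); ring.
- rewrite !Phi_0 // !latN.
  rewrite (eq_bigr (fun u => - x (Some (Some (prf g u))))); last by move=> u _; rewrite latN.
  rewrite sumrN; ring.
- by rewrite !Phi_m1 // latN.
Qed.

Lemma PhiB g x y : g \in WB I -> Phi g (x - y) = Phi g x - Phi g y.
Proof. by move=> gW; rewrite PhiD // PhiN. Qed.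

Lemma Phi_scale g c x : g \in WB I -> Phi g (lscale c x) = lscale c (Phi g x).
Proof.
move=> gW; apply/ffunP => -[[w|]|]; rewrite lscaleE.
- by rewrite !Phi_i // !lscaleE; case: (w \in flipped g); ring.
- rewrite !Phi_0 // !lscaleE.
  rewrite (eq_bigr (fun u => c * x (Some (Some (prf g u))))); last by move=> u _; rewrite lscaleE.
  rewrite -mulr_sumr; ring.
- by rewrite !Phi_m1 // lscaleE.
Qed.

Lemma l0E b : l0 I b = (b == Some None)%:Z.
Proof. by rewrite lbE; case: b => [[]|]. Qed.

Lemma Phi_l0 g : g \in WB I -> Phi g (l0 I) = l0 I.
Proof.
move=> gW; apply/ffunP => -[[w|]|].
- by rewrite !Phi_i // !l0E /=; case: (w \in flipped g).
- rewrite !Phi_0 // !l0E /= big1; first by ring. by move=> u _; rewrite l0E.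
- by rewrite !Phi_m1 // !l0E.
Qed.

Lemma Phi_lsl0 g c : g \in WB I -> Phi g (lscale c (l0 I)) = lscale c (l0 I).
Proof. by move=> gW; rewrite Phi_scale // Phi_l0. Qed.

Lemma lm1E b : lm1 I b = (b == None)%:Z.
Proof. by rewrite lbE; case: b => [[]|]. Qed.

Lemma KcanE b : Kcan I b = match b with None => -2 | Some None => -2 | Some (Some _) => 1 end.
Proof.
rewrite /Kcan latD lscaleE latD lm1E l0E latS.
case: b => [[w|]|] /=.
- rewrite (eq_bigr (fun i => 1 * (i == w)%:Z)); last by move=> i _; rewrite lbE eqSS mul1r.
  by rewrite sum_indicT.
- by rewrite big1 // => i _; rewrite lbE.
- by rewrite big1 // => i _; rewrite lbE.
Qed.

Lemma Phi_K g : g \in WB I -> ~~ odd (tcount g) -> Phi g (Kcan I) = Kcan I.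
Proof.
move=> gW eg; apply/ffunP => -[[w|]|].
- by rewrite !Phi_i // !KcanE; case: (w \in flipped g).
- rewrite !Phi_0 // !KcanE.
  rewrite (eq_bigr (fun u => 1)); last by move=> u _; rewrite KcanE.
  rewrite sumr_const /tcount.
  have := even_half eg; rewrite /tcount => {2}->.
  rewrite natrM !natz; ring.
- by rewrite Phi_m1.
Qed.

Lemma relmin_gen (H : {set {perm sym I}}) (j0 : I) :
  (forall h, h \in H -> h \in WB I /\ ~~ odd (tcount h)) ->
  (forall j, exists2 h, h \in H & prf h j = j /\ j \in flipped h) -> relmin H.
Proof.
move=> HW Hmin x; split.
- move=> inv.
  have key : forall j, x None = - 2 * x (Some (Some j)).
    move=> j; have [h hH [pj fj]] := Hmin j; have [hW _] := HW h hH.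
    have := congr1 (fun y => y (Some (Some j))) (inv h hH); rewrite /= Phi_i // fj pj => e.
    move: e; move: (x None) (x (Some (Some j))) => a b e; lia.
  have xj : forall j, x (Some (Some j)) = x (Some (Some j0)).
    move=> j; have := key j; rewrite (key j0) => e; lia.
  exists (x (Some None) + 2 * x (Some (Some j0))), (x (Some (Some j0))).
  apply/ffunP => -[[w|]|]; rewrite latD !lscaleE l0E KcanE /=.
  + rewrite xj; ring.
  + ring.
  + rewrite (key j0); ring.
- move=> [a [b ->]] h hH; have [hW eh] := HW h hH.
  by rewrite PhiD // !Phi_scale // Phi_l0 // Phi_K.
Qed.

End WBfacts.


Lemma hom0 (gT : finGroupType) (H : {group gT}) (k : gT -> int) :
  {in H &, forall g h, k (g * h)%g = k g + k h} -> {in H, forall g, k g = 0}.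
Proof.
move=> hk g gH.
have k1 : k 1%g = 0.
  have := hk _ _ (group1 H) (group1 H); rewrite mulg1 => e.
  by apply: (addrI (k 1%g)); rewrite addr0 -e.
have kp : forall m, k (g ^+ m)%g = m%:Z * k g.
  elim=> [|m IH]; first by rewrite expg0 k1 mul0r.
  by rewrite expgS hk ?groupX // IH -addn1 PoszD mulrDl mul1r addrC.
have := kp #[g]%g; rewrite expg_order k1 => /esym /eqP.
rewrite mulf_eq0 => /orP[/eqP|/eqP //].
by move: (order_gt0 g); move: (#[g])%g => n; lia.
Qed.

Lemma pow0 (gT : finGroupType) (g : gT) (k : gT -> int) :
  k 1%g = 0 -> (forall m, k (g * g ^+ m)%g = k g + k (g ^+ m)%g) -> k g = 0.
Proof.
move=> k1 hk.
have kp : forall m, k (g ^+ m)%g = m%:Z * k g.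
  elim=> [|m IH]; first by rewrite expg0 k1 mul0r.
  by rewrite expgS hk IH -addn1 PoszD mulrDl mul1r addrC.
have := kp #[g]%g; rewrite expg_order k1 => /esym /eqP.
rewrite mulf_eq0 => /orP[/eqP|/eqP //].
by move: (order_gt0 g); move: (#[g])%g => n; lia.
Qed.

Section Transfer.
Variables (I J : finType) (G : {group {perm sym I}}) (P : {perm sym I} -> {perm sym J})
  (e : J -> option I) (einv : I -> option J).
Hypothesis HG : G \subset WD I.
Hypothesis He : forall i j, (einv i == Some j) = (e j == Some i).
Hypothesis HN : forall j1 j2, e j1 = None -> e j2 = None -> j1 = j2.
Hypothesis HPhom : {in G &, forall g h, P (g * h)%g = (P g * P h)%g}.
Hypothesis HPW : {in G, forall g, P g \in WB J}.
Hypothesis HPe : {in G, forall g, ~~ odd (tcount (P g))}.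
Hypothesis HS : forall g j i, g \in G -> e j = Some i ->
  e (prf (P g) j) = Some (prf g i) /\ (j \in flipped (P g)) = (i \in flipped g).
Hypothesis HNone : forall g j, g \in G -> e j = None -> prf (P g) j = j.
Hypothesis Hstab : forall g i, g \in G -> (einv (prf g i) == None) = (einv i == None).

Implicit Types (y z : lat J) (x : lat I).

Lemma GW g : g \in G -> g \in WB I.
Proof. by move=> /(subsetP HG); rewrite inE => /andP[]. Qed.
Lemma Ge g : g \in G -> ~~ odd (tcount g).
Proof. by move=> /(subsetP HG); rewrite inE => /andP[]. Qed.

Lemma einvE i j : einv i = Some j -> e j = Some i.
Proof. by move=> h; apply/eqP; rewrite -He h. Qed.
Lemma eE i j : e j = Some i -> einv i = Some j.
Proof. by move=> h; apply/eqP; rewrite He h. Qed.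

Definition iota (y : lat J) : lat I := [ffun b => match b with
  | None => y None | Some None => y (Some None)
  | Some (Some i) => if einv i is Some j then y (Some (Some j)) else 0 end].

Definition proj (x : lat I) (xN : int) : lat J := [ffun b => match b with
  | None => x None | Some None => x (Some None)
  | Some (Some j) => if e j is Some i then x (Some (Some i)) else xN end].

Lemma sumJ (w : J -> int) : (forall j, e j = None -> w j = 0) ->
  \sum_j w j = \sum_i (if einv i is Some j then w j else 0).
Proof.
move=> w0.
have -> : \sum_i (if einv i is Some j then w j else 0) = \sum_i \sum_j (einv i == Some j)%:Z * w j.
  apply: eq_bigr => i _; case E: (einv i) => [j|].
    rewrite (bigD1 j) //= eqxx mul1r big1 ?addr0 // => j' /negbTE nj.
    by rewrite (inj_eq (@Some_inj _)) eq_sym nj mul0r.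
  by rewrite big1 // => j _; rewrite mul0r.
rewrite exchange_big /=; apply: eq_bigr => j _.
under eq_bigr => i _ do rewrite He.
case E: (e j) => [i|]; last by rewrite w0 // big1 // => i _; rewrite mulr0.
rewrite (bigD1 i) //= eqxx mul1r big1 ?addr0 // => i' /negbTE ni.
by rewrite (inj_eq (@Some_inj _)) eq_sym ni mul0r.
Qed.

Lemma sumJn (w : J -> nat) : (forall j, e j = None -> w j = 0%N) ->
  (\sum_j w j = \sum_i (if einv i is Some j then w j else 0))%N.
Proof.
move=> w0; apply/eqP; rewrite -eqz_nat; apply/eqP.
rewrite !Posz_sum (@sumJ (fun j => Posz (w j))); last by move=> j /w0 ->.
by apply: eq_bigr => i _; case: (einv i).
Qed.
Lemma iotaD y z : iota (y + z) = iota y + iota z.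
Proof.
by apply/ffunP => -[[i|]|]; rewrite !ffunE //=; case: (einv i) => [j|]; rewrite ?ffunE ?addr0.
Qed.

Lemma iota_prf g y i : g \in G ->
  iota y (Some (Some (prf g i))) = if einv i is Some j then y (Some (Some (prf (P g) j))) else 0.
Proof.
move=> gG; rewrite ffunE /=.
case E: (einv i) => [j|].
  by have [/eE -> _] := HS gG (einvE E).
by have := Hstab i gG; rewrite E eqxx => /eqP ->.
Qed.

Lemma iota_equiv g y : g \in G -> y None = 0 -> (forall j, e j = None -> y (Some (Some j)) = 0) ->
  iota (Phi (P g) y) = Phi g (iota y).
Proof.
move=> gG y0 yN; have gW := GW gG; have pW := HPW gG.
apply/ffunP => -[[i|]|].
- rewrite Phi_i // iota_prf // [iota y None]ffunE y0 !ffunE /=.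
  case E: (einv i) => [j|] /=; last by case: (i \in flipped g); rewrite ?oppr0 ?subr0.
  have [_ <-] := HS gG (einvE E).
  by rewrite Phi_i // y0.
  rewrite ffunE /= !Phi_0 //.
  have -> : \sum_(u in flipped g) iota y (Some (Some (prf g u))) =
            \sum_(j in flipped (P g)) y (Some (Some (prf (P g) j))).
    rewrite [RHS]big_mkcond /= (@sumJ (fun j => if j \in flipped (P g) then y (Some (Some (prf (P g) j))) else 0)); last first.
      by move=> j ej; rewrite HNone // yN //; case: (_ \in _).
    rewrite big_mkcond /=; apply: eq_bigr => i _.
    rewrite iota_prf //; case E: (einv i) => [j|]; last by case: (_ \in _).
    by have [_ ->] := HS gG (einvE E).
  by rewrite !ffunE /= y0.
- by rewrite Phi_m1 // !ffunE /= Phi_m1.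
Qed.
Lemma parity_arg g0 j0 x : g0 \in G -> e j0 = None -> j0 \in flipped (P g0) ->
  (forall i, einv i = None -> (Phi g0 x - x) (Some (Some i)) = 0) ->
  exists a, x None = 2 * a.
Proof.
move=> gG ej0 fj0 hx; have gW := GW gG; have pW := HPW gG.
set B := (\sum_i ((einv i == None) && (i \in flipped g0)))%N.
set A := (\sum_i ((einv i != None) && (i \in flipped g0)))%N.
have tg : tcount g0 = (A + B)%N.
  rewrite /tcount card_sum /A /B -big_split /=; apply: eq_bigr => i _.
  by case: (einv i == None); case: (i \in flipped g0).
have tp : tcount (P g0) = (A + 1)%N.
  rewrite /tcount card_sum.
  have -> : (\sum_j (j \in flipped (P g0)) = \sum_j (if e j is Some _ then nat_of_bool (j \in flipped (P g0)) else 0%N)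
        + \sum_j ((e j == None) && (j \in flipped (P g0))))%N.
    rewrite -big_split /=; apply: eq_bigr => j _; case: (e j) => //=; by rewrite addn0.
  congr (_ + _)%N.
    rewrite (@sumJn (fun j => if e j is Some _ then nat_of_bool (j \in flipped (P g0)) else 0%N)); last by move=> j ->.
    apply: eq_bigr => i _; case E: (einv i) => [j|] //=.
    by rewrite (einvE E); have [_ ->] := HS gG (einvE E).
  rewrite (bigD1 j0) //= ej0 eqxx fj0 /= big1 // => j nj.
  case E: (e j) => //=; by rewrite (HN E ej0) eqxx in nj.
have oB : odd B.
  have := Ge gG; have := HPe gG; rewrite tg tp !oddD /=.
  by case: (odd A); case: (odd B).
set d := fun i => 2 * x (Some (Some i)) + x None.
have hd : forall i, einv i == None -> d i = (if i \in flipped g0 then -1 else 1) * d (prf g0 i).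
  move=> i /eqP ei; have := hx i ei; rewrite latB Phi_i // /d.
  case: (i \in flipped g0) => /eqP; rewrite subr_eq0 => /eqP <-; ring.
have hprod : \prod_(i | einv i == None) d i = (-1) ^+ B * \prod_(i | einv i == None) d i.
  rewrite {1}(eq_bigr _ hd) big_split /=.
  congr (_ * _).
    rewrite /B (big_morph (fun n : nat => (-1 : int) ^+ n) (fun m n => exprD (-1 : int) m n) (expr0 _)).
    rewrite [RHS](bigID (fun i => einv i == None)) /= [X in _ = _ * X]big1 ?mulr1; last first.
      by move=> i /negbTE ->.
    by apply: eq_bigr => i ->; case: (i \in flipped g0).
  rewrite [RHS](reindex_inj (prf_inj gW)) /=.
  by apply: eq_bigl => i; rewrite Hstab.
move: hprod; rewrite -signr_odd oB expr1 => hprod.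
have : \prod_(i | einv i == None) d i == 0.
  by move: hprod; move: (\prod_(i | _) _) => p; lia.
move=> /prodf_eq0 [i _]; rewrite /d => /eqP h0.
exists (- x (Some (Some i))); lia.
Qed.
Lemma P1 : P 1%g = 1%g.
Proof.
apply: (mulgI (P 1%g)); rewrite mulg1 -HPhom ?group1 //.
by rewrite mulg1.
Qed.

Lemma transfer_H1 : condH1 G -> condH1 [set P g | g in G].
Proof.
move=> H1G H' sH' f fcoc.
have gs : group_set [set g in G | P g \in H'].
  apply/group_setP; split; first by rewrite inE group1 P1 group1.
  move=> g h; rewrite !inE => /andP[gG pg] /andP[hG ph].
  by rewrite groupM // HPhom // groupM.
pose Hs := Group gs.
have memH g : (g \in Hs) = (g \in G) && (P g \in H') by rewrite inE.
have HsG : forall g, g \in Hs -> g \in G by move=> g; rewrite memH => /andP[].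
have HsP : forall g, g \in Hs -> P g \in H' by move=> g; rewrite memH => /andP[].
pose phi g := f (P g).
have coc : {in Hs &, forall g h, phi (g * h)%g = phi g + Phi (P g) (phi h)}.
  by move=> g h gH hH; rewrite /phi HPhom ?HsG // fcoc ?HsP.
have phiN : {in Hs, forall g, phi g None = 0}.
  apply: (@hom0 _ Hs (fun g => phi g None)) => g h gH hH.
  by rewrite coc // latD Phi_m1 // HPW // HsG.
have [c hc] : exists c, {in Hs, forall g j, e j = None ->
    phi g (Some (Some j)) = c * (j \in flipped (P g))%:Z}.
  case: (pickP (fun j => e j == None)) => [j0 /eqP ej0 | noN]; last first.
    by exists 0 => g _ j ej; move: (noN j); rewrite ej eqxx.
  pose s g := j0 \in flipped (P g).
  pose eN g := phi g (Some (Some j0)).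
  have ecoc : {in Hs &, forall g h, eN (g * h)%g = eN g + (if s g then - eN h else eN h)}.
    move=> g h gH hH; rewrite /eN coc // latD Phi_i ?HPW ?HsG // HNone ?HsG // phiN // /s.
    by case: (j0 \in _); rewrite ?sub0r.
  have sM : {in Hs &, forall g h, s (g * h)%g = s g (+) s h}.
    by move=> g h gH hH; rewrite /s HPhom ?HsG // flipped_mul ?HPW ?HsG // HNone ?HsG.
  have s1 : s 1%g = false by rewrite /s P1 flipped1 inE.
  have eN1 : eN 1%g = 0.
    have := ecoc _ _ (group1 Hs) (group1 Hs); rewrite mulg1 s1 => e1.
    by apply: (addrI (eN 1%g)); rewrite addr0 -e1.
  have van : forall g, g \in Hs -> ~~ s g -> eN g = 0.
    move=> g gH ns; apply: (pow0 eN1) => m.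
    by rewrite ecoc ?groupX // (negbTE ns).
  have ej : forall j, e j = None -> j = j0 by move=> j ej; apply: HN.
  case: (boolP [exists g in Hs, s g]) => [/exists_inP [g0 g0H sg0] | /exists_inP ns].
  - exists (eN g0) => g gH j /ej ->.
    move: sg0; rewrite /s => sg0.
    case sg: (j0 \in flipped (P g)).
      have := ecoc _ _ gH g0H; rewrite /s sg van ?groupM //; last by rewrite sM // /s sg sg0.
      rewrite -/(eN g) /= mulr1; move: (eN g) (eN g0) => a b; lia.
    by rewrite -/(eN g) van ?/s ?sg // mulr0.
  - exists 0 => g gH j /ej ->; rewrite mul0r -/(eN g) van //.
    by apply/negP => sg; apply: ns; exists g.
have PW g : g \in Hs -> P g \in WB J by move=> gH; apply: HPW; apply: HsG.
have PE g : g \in Hs -> ~~ odd (tcount (P g)) by move=> gH; apply: HPe; apply: HsG.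
pose L := lm1 J.
pose phi1 g := phi g + lscale c (Phi (P g) L - L).
have coc1 : {in Hs &, forall g h, phi1 (g * h)%g = phi1 g + Phi (P g) (phi1 h)}.
  move=> g h gH hH; rewrite /phi1 coc // HPhom ?HsG // Phi_mul ?PW ?PE //.
  rewrite PhiD ?PW // Phi_scale ?PW // PhiB ?PW //.
  by apply/ffunP => b; rewrite !(latD, latB, latN, lscaleE); ring.
have phi1N : {in Hs, forall g, phi1 g None = 0}.
  by move=> g gH; rewrite /phi1 latD lscaleE latB Phi_m1 ?PW // phiN // subrr mulr0 addr0.
have phi1E : {in Hs, forall g j, e j = None -> phi1 g (Some (Some j)) = 0}.
  move=> g gH j ej; rewrite /phi1 latD lscaleE latB Phi_i ?PW // hc // !lm1E /=.
  by case: (j \in flipped (P g)) => /=; ring.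
pose psi g := iota (phi1 g).
have cocpsi : {in Hs &, forall g h, psi (g * h)%g = psi g + Phi g (psi h)}.
  move=> g h gH hH; rewrite /psi coc1 // iotaD iota_equiv ?HsG ?phi1N //.
  by move=> j; apply: phi1E.
have sub : Hs \subset G by apply/subsetP.
have [x hx] := H1G Hs sub psi cocpsi.
have [xN hxN] : exists xN : int, forall g j, g \in Hs -> e j = None ->
    j \in flipped (P g) -> 2 * xN + x None = 0.
  case: (boolP [exists g in Hs, [exists j, (e j == None) && (j \in flipped (P g))]]).
    move/exists_inP => [g0 g0H /existsP [j0 /andP [/eqP ej0 fj0]]].
    have [a ha] : exists a, x None = 2 * a.
      apply: (parity_arg (HsG _ g0H) ej0 fj0) => i ei.
      by rewrite -hx // /psi ffunE /= ei.
    by exists (-a) => *; rewrite ha; ring.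
  move/exists_inP => nex; exists 0 => g j gH ej fj; exfalso; apply: nex; exists g => //.
  by apply/existsP; exists j; rewrite ej eqxx fj.
pose xb := proj x xN.
pose D g := phi1 g - (Phi (P g) xb - xb).
have DE : {in Hs, forall g, D g = lscale (D g (Some None)) (l0 J)}.
  move=> g gH; have gW := GW (HsG _ gH); apply/ffunP => -[[j|]|].
  - rewrite lscaleE l0E /= mulr0 /D !latB Phi_i ?PW //.
    case E: (e j) => [i|].
      have := congr1 (fun y : lat I => y (Some (Some i))) (hx g gH).
      rewrite /psi ffunE /= (eE E) latB Phi_i // => ->.
      have [e1 <-] := HS (HsG _ gH) E.
      rewrite !ffunE /= E e1; case: (i \in flipped g); ring.
    rewrite phi1E // HNone ?HsG // !ffunE /= E.
    case F: (j \in flipped (P g)); last by ring.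
    have := hxN g j gH E F => h0; move: h0; move: (x None) => a; lia.
  - by rewrite lscaleE l0E /= mulr1.
  - by rewrite lscaleE l0E /= mulr0 /D !latB Phi_m1 ?PW // phi1N // subrr subr0.
have Dcoc : {in Hs &, forall g h, D (g * h)%g = D g + Phi (P g) (D h)}.
  move=> g h gH hH; rewrite /D coc1 // HPhom ?HsG // Phi_mul ?PW ?PE //.
  rewrite !PhiB ?PW //.
  by apply/ffunP => b; rewrite !(latD, latB, latN); ring.
have k0 : {in Hs, forall g, D g (Some None) = 0}.
  apply: (@hom0 _ Hs (fun g => D g (Some None))) => g h gH hH.
  by rewrite Dcoc // latD [D h]DE // Phi_lsl0 ?PW // lscaleE l0E /= mulr1.
have key : {in Hs, forall g, phi1 g = Phi (P g) xb - xb}.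
  move=> g gH; apply/eqP; rewrite -subr_eq0; apply/eqP.
  rewrite -/(D g) DE // k0 //; apply/ffunP => b; rewrite lscaleE mul0r ffunE.
  by [].
exists (xb - lscale c L) => h hh.
have /imsetP [g gG eh] := subsetP sH' h hh; subst h.
have gH : g \in Hs by rewrite memH gG hh.
have -> : f (P g) = phi1 g - lscale c (Phi (P g) L - L) by rewrite /phi1 addrK.
rewrite key // PhiB ?PW // Phi_scale ?PW //.
by apply/ffunP => b; rewrite !(latD, latB, latN, lscaleE); ring.
Qed.
Lemma transfer_relmin (i0 : I) : einv i0 != None -> minimal_cond G ->
  (forall j, e j = None -> exists2 g, g \in G & j \in flipped (P g)) ->
  relmin [set P g | g in G].
Proof.
move=> ei0 Hmin HNf.
case E0: (einv i0) ei0 => [j0|] // _.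
apply: (@relmin_gen _ _ j0).
  by move=> h /imsetP [g gG ->]; split; [apply: HPW | apply: HPe].
move=> j; case E: (e j) => [i|]; last first.
  have [g gG fj] := HNf j E; exists (P g); first by apply/imsetP; exists g.
  by rewrite HNone.
have [g gG gi] := Hmin i.
have pi : prf g i = i by rewrite /prf gi.
have fi : i \in flipped g by rewrite inE gi.
exists (P g); first by apply/imsetP; exists g.
have [e1 e2] := HS gG E; rewrite e2 fi; split => //.
rewrite pi in e1.
by move: (eE e1); rewrite (eE E) => -[].
Qed.
End Transfer.




Section Inst.
Variables (I : finType) (O : {set I}).
Implicit Types (g h : {perm sym I}).

Lemma restr_inj g : g \in WB I -> {in O, forall i, prf g i \in O} -> injective (@restr I O g).
Proof.
move=> gW st [k1 b1] [k2 b2]; rewrite /restr /= !WB_gen //= => -[e1 e2].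
have v1 : val (insubd k1 (prf g (val k1))) = prf g (val k1) by rewrite val_insubd st ?(valP k1).
have v2 : val (insubd k2 (prf g (val k2))) = prf g (val k2) by rewrite val_insubd st ?(valP k2).
have ek : k1 = k2 by apply: val_inj; apply: (prf_inj gW); rewrite -v1 -v2 e1.
by subst k2; congr (_, _); move: e2; case: b1; case: b2; case: (_ \in _).
Qed.

Lemma gOE g z : g \in WB I -> {in O, forall i, prf g i \in O} -> gO O g z = @restr I O g z.
Proof.
move=> gW st; rewrite /gO.
have inj : injectiveb [ffun x => @restr I O g x].
  by apply/injectiveP => a b; rewrite !ffunE; apply: restr_inj.
by rewrite -pvalE insubdK // ffunE.
Qed.
Definition stab g := {in O, forall i, prf g i \in O}.

Lemma WB_mul g h : g \in WB I -> h \in WB I -> (g * h)%g \in WB I.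
Proof. by move=> gW hW; rewrite inE; apply/forallP => z; rewrite !permM !WB_sflip. Qed.

Lemma stab_mul g h : h \in WB I -> stab g -> stab h -> stab (g * h)%g.
Proof. by move=> hW sg sh i iO; rewrite prf_mul // sh // sg. Qed.

Lemma val_insubd_prf g k : stab g -> val (insubd k (prf g (val k)) : sO O) = prf g (val k).
Proof. by move=> st; rewrite val_insubd st ?(valP k). Qed.

Lemma gO_val g k b : g \in WB I -> stab g ->
  gO O g (k, b) = (insubd k (prf g (val k)), b (+) (val k \in flipped g)).
Proof. by move=> gW st; rewrite gOE // /restr /= WB_gen. Qed.

Lemma val_prf_gO g k : g \in WB I -> stab g -> val (prf (gO O g) k) = prf g (val k).
Proof. by move=> gW st; rewrite /prf gO_val //= val_insubd_prf. Qed.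

Lemma flipped_gO g k : g \in WB I -> stab g -> (k \in flipped (gO O g)) = (val k \in flipped g).
Proof. by move=> gW st; rewrite [in LHS]inE gO_val //=; case: (_ \in _). Qed.

Lemma gO_WB g : g \in WB I -> stab g -> gO O g \in WB (sO O).
Proof.
move=> gW st; rewrite inE; apply/forallP => -[k b] /=.
by rewrite /sflip /= !gO_val //= addNb.
Qed.

Lemma pair_eqO (a b : sym (sO O)) : val a.1 = val b.1 -> a.2 = b.2 -> a = b.
Proof. by case: a b => [k1 b1] [k2 b2] /= /val_inj -> ->. Qed.

Lemma gO_mul g h : g \in WB I -> h \in WB I -> stab g -> stab h ->
  gO O (g * h)%g = (gO O g * gO O h)%g.
Proof.
move=> gW hW sg sh; apply/permP => -[k b]; rewrite permM.
have sgh := stab_mul hW sg sh; have ghW := WB_mul gW hW.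
rewrite !gO_val //.
apply: pair_eqO => /=.
  by rewrite !val_insubd_prf // prf_mul.
by rewrite flipped_mul // val_insubd_prf // addbA.
Qed.

Lemma odd_tcount_mul (J : finType) (a b : {perm sym J}) : a \in WB J -> b \in WB J ->
  odd (tcount (a * b)%g) = odd (tcount a) (+) odd (tcount b).
Proof.
move=> aW bW; have := congr1 odd (tcount_mul aW bW).
by rewrite mul2n !oddD odd_double addbF.
Qed.

Lemma sigma_gO_mul g h : g \in WB I -> h \in WB I -> stab g -> stab h ->
  sigma_odd (gO O (g * h)%g) = sigma_odd (gO O g) (+) sigma_odd (gO O h).
Proof.
by move=> gW hW sg sh; rewrite /sigma_odd gO_mul // odd_tcount_mul // gO_WB.
Qed.

Lemma POfun_inj g : g \in WB I -> stab g -> injective (@POfun I O g).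
Proof.
move=> gW st [[k1|] b1] [[k2|] b2]; rewrite /POfun /= => -[].
- move=> e1 e2.
  have : gO O g (k1, b1) = gO O g (k2, b2).
    by move: e1 e2; case: (gO O g (k1, b1)) => ? ?; case: (gO O g (k2, b2)) => ? ? /= -> ->.
  by move/perm_inj => [-> ->].
- by [].
- by [].
- by move=> e; congr (_, _); move: e; case: b1; case: b2; case: (sigma_odd _).
Qed.

Lemma POE g z : g \in WB I -> stab g -> PO O g z = @POfun I O g z.
Proof.
move=> gW st; rewrite /PO.
have inj : injectiveb [ffun x => @POfun I O g x].
  by apply/injectiveP => a b; rewrite !ffunE; apply: POfun_inj.
by rewrite -pvalE insubdK // ffunE.
Qed.
Lemma PO_Some g k b : g \in WB I -> stab g ->
  PO O g (Some k, b) = (Some (insubd k (prf g (val k))), b (+) (val k \in flipped g)).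
Proof. by move=> gW st; rewrite POE // /POfun /= gO_val. Qed.

Lemma PO_None g b : g \in WB I -> stab g ->
  PO O g (None, b) = (None, b (+) sigma_odd (gO O g)).
Proof. by move=> gW st; rewrite POE. Qed.

Lemma PO_WB g : g \in WB I -> stab g -> PO O g \in WB (option (sO O)).
Proof.
move=> gW st; rewrite inE; apply/forallP => -[[k|] b] /=.
  by rewrite /sflip /= !PO_Some //= addNb.
by rewrite /sflip /= !PO_None //= addNb.
Qed.

Lemma PO_mul g h : g \in WB I -> h \in WB I -> stab g -> stab h ->
  PO O (g * h)%g = (PO O g * PO O h)%g.
Proof.
move=> gW hW sg sh; have sgh := stab_mul hW sg sh; have ghW := WB_mul gW hW.
apply/permP => -[[k|] b]; rewrite permM.
  rewrite !PO_Some //; congr (Some _, _).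
    by apply: val_inj; rewrite !val_insubd_prf // prf_mul.
  by rewrite flipped_mul // val_insubd_prf // addbA.
by rewrite !PO_None // sigma_gO_mul // addbA.
Qed.

Lemma PO_even g : g \in WB I -> stab g -> ~~ odd (tcount (PO O g)).
Proof.
move=> gW st; rewrite /tcount card_sum big_optionE /=.
rewrite inE PO_None //=.
have -> : (\sum_k ((Some k : option (sO O)) \in flipped (PO O g)))%N = tcount (gO O g).
  rewrite /tcount card_sum; apply: eq_bigr => k _.
  by rewrite !inE PO_Some // gO_val.
by rewrite negbK /sigma_odd oddD oddb addbb.
Qed.

Lemma insub_eqNone i : (insub i == None :> option (sO O)) = (i \notin O).
Proof. by case: insubP => [u -> _|/negbTE ->]. Qed.

Lemma insub_eqSome i (k : sO O) : (insub i == Some k) = (val k == i).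
Proof.
case: insubP => [u iO <-|niO].
  by rewrite (inj_eq (@Some_inj _)) val_eqE eq_sym.
by apply/esym/negbTE; apply: contraNneq niO => <-; apply: (valP k).
Qed.
End Inst.

Unset Implicit Arguments.
Close Scope ring_scope.

Theorem lemma6p2 (n : nat) (G : {group {perm sym 'I_n}}) (i0 : 'I_n) :
  G \subset WD 'I_n ->
  condH1 G ->
  relmin G ->
  minimal_cond G ->
  let O := pr_orbit G i0 in
  if [forall g in G, ~~ sigma_odd (gO O g)]
  then relmin (GbarA G O) /\ condH1 (GbarA G O)
  else relmin (GbarB G O) /\ condH1 (GbarB G O).
Proof.
move=> HG H1 _ Hmin O.
have GW : forall g, g \in G -> g \in WB 'I_n.
  by move=> g /(subsetP HG); rewrite inE => /andP[].
have Ost : forall g i, g \in G -> i \in O -> prf g i \in O.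
  move=> g i gG /imsetP [h hG ->]; apply/imsetP; exists (h * g)%g; first by rewrite groupM.
  by rewrite prf_mul // GW.
have st : forall g, g \in G -> stab O g by move=> g gG i iO; apply: Ost.
have Oiff : forall g i, g \in G -> (prf g i \in O) = (i \in O).
  move=> g i gG; apply/idP/idP; last exact: Ost.
  move=> h; have := Ost _ _ (groupVr gG) h.
  by rewrite -prf_mul ?GW ?groupVr // mulgV prf1.
have i0O : i0 \in O by apply/imsetP; exists 1%g; rewrite ?group1 // prf1.
have Phom : {in G &, forall g h, gO O (g * h)%g = (gO O g * gO O h)%g}.
  by move=> g h gG hG; apply: gO_mul; [apply: GW|apply: GW|apply: st|apply: st].
have POhom : {in G &, forall g h, PO O (g * h)%g = (PO O g * PO O h)%g}.
  by move=> g h gG hG; apply: PO_mul; [apply: GW|apply: GW|apply: st|apply: st].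
case: ifP => Hall.
- have HeA : forall i (k : sO O), (insub i == Some k) = (Some (val k) == Some i).
    by move=> i k; rewrite insub_eqSome (inj_eq (@Some_inj _)).
  have HNA : forall j1 j2 : sO O, Some (val j1) = None -> Some (val j2) = None -> j1 = j2 by [].
  have HPWA : {in G, forall g, gO O g \in WB (sO O)} by move=> g gG; have gW := GW g gG; have sg := st g gG; apply: gO_WB.
  have HPeA : {in G, forall g, ~~ odd (tcount (gO O g))}.
    by move=> g gG; have gW := GW g gG; have sg := st g gG; move/forall_inP: Hall => /(_ g gG).
  have HSA : forall g (j : sO O) i, g \in G -> Some (val j) = Some i ->
      Some (val (prf (gO O g) j)) = Some (prf g i) /\ (j \in flipped (gO O g)) = (i \in flipped g).
    move=> g j i gG [<-]; have gW := GW g gG; have sg := st g gG; split; first by rewrite val_prf_gO //.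
    by rewrite flipped_gO //.
  have HNoneA : forall g (j : sO O), g \in G -> Some (val j) = None -> prf (gO O g) j = j by [].
  have HstabA : forall (g : {perm sym 'I_n}) (i : 'I_n), g \in G -> ((insub (prf g i) : option (sO O)) == None) = ((insub i : option (sO O)) == None).
    by move=> g i gG; rewrite !insub_eqNone Oiff.
  split.
  + apply: (transfer_relmin HeA HPWA HPeA HSA HNoneA (i0 := i0)) => //.
    by rewrite insub_eqNone negbK.
  + exact: (transfer_H1 HG HeA HNA Phom HPWA HPeA HSA HNoneA HstabA H1).
- pose eB := fun o : option (sO O) => omap val o.
  pose einvB := fun i : 'I_n => omap Some (insub i : option (sO O)).
  have einvNone : forall i, (einvB i == None) = (i \notin O).
    by move=> i; rewrite /einvB; case: insubP => [u -> _|/negbTE ->].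
  have HeB : forall i j, (einvB i == Some j) = (eB j == Some i).
    move=> i [k|] /=; rewrite /einvB.
      case: insubP => [u iO <-|niO] /=.
        by rewrite !(inj_eq (@Some_inj _)) val_eqE eq_sym.
      by apply/esym/negbTE; apply: contraNneq niO => -[<-]; apply: (valP k).
    by case: insubP.
  have HNB : forall j1 j2, eB j1 = None -> eB j2 = None -> j1 = j2 by move=> [?|] [?|].
  have HPWB : {in G, forall g, PO O g \in WB (option (sO O))}.
    by move=> g gG; have gW := GW g gG; have sg := st g gG; apply: PO_WB.
  have HPeB : {in G, forall g, ~~ odd (tcount (PO O g))}.
    by move=> g gG; have gW := GW g gG; have sg := st g gG; apply: PO_even.
  have HSB : forall g j i, g \in G -> eB j = Some i ->
      eB (prf (PO O g) j) = Some (prf g i) /\ (j \in flipped (PO O g)) = (i \in flipped g).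
    move=> g [k|] i gG //= [<-]; have gW := GW g gG; have sg := st g gG; rewrite /prf PO_Some // //=; split.
      by rewrite val_insubd_prf ?st.
    by rewrite inE PO_Some // //=; case: (_ \in _).
  have HNoneB : forall g j, g \in G -> eB j = None -> prf (PO O g) j = j.
    by move=> g [k|] gG //= _; have gW := GW g gG; have sg := st g gG; rewrite /prf PO_None //.
  have HstabB : forall g i, g \in G -> (einvB (prf g i) == None) = (einvB i == None).
    by move=> g i gG; rewrite !einvNone Oiff.
  split.
  + apply: (transfer_relmin HeB HPWB HPeB HSB HNoneB (i0 := i0)) => //.
      by rewrite einvNone negbK.
    move=> [k|] // _.
    move/negbT: Hall; rewrite negb_forall_in => /exists_inP [g gG]; rewrite negbK => sg.
    have gW := GW g gG; have sgs := st g gG.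
    by exists g => //; rewrite inE PO_None //= sg.
  + exact: (transfer_H1 HG HeB HNB POhom HPWB HPeB HSB HNoneB HstabB H1).
Qed.
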